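(* For $n\in\mathbb{N}$ let $(U_k^{(n)})_{k\in\mathbb{N}}$ be independent random variables uniformly distributed on $\{1,\dots,n\}$. Assume $m_n\to\infty$ and $m_n=o(n)$ as $n\to\infty$. Then $${\rm Var}\Bigl(\sum_{m_n<p\le n,\ p\ \text{prime}}\log p\Bigl(\sum_{k=1}^{m_n}\mathbbm{1}_{\{\lambda_p(U_k^{(n)})\ge1\}}-\mathbbm{1}_{\{\max_{1\le k\le m_n}\lambda_p(U_k^{(n)})\ge1\}}\Bigr)\Bigr)=O(m_n\log m_n),\qquad n\to\infty.$$
   Context: For a prime $p$ and $k\in\mathbb{N}$, $\lambda_p(k)$ is the exponent of $p$ in the prime factorization of $k$. *)

(* Defs.v *)
From HB Require Import structures.
From mathcomp Require Import all_boot all_order all_algebra.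
From mathcomp Require Import reals exp.
Set Implicit Arguments. Unset Strict Implicit. Unset Printing Implicit Defensive.
Import Order.TTheory GRing.Theory Num.Theory.
Local Open Scope ring_scope.

(* A sample (U_1,...,U_m) of m independent uniform variables on {1,...,n} is
   an element u of {ffun 'I_m -> 'I_n}, with U_{k+1} = (u k) + 1; the joint law
   is the uniform law on this finite product space. *)
Definition Uval (n m : nat) (u : {ffun 'I_m -> 'I_n}) (k : 'I_m) : nat :=
  (val (u k)).+1.

Definition lambda (p k : nat) : nat := logn p k.

Definition Xsum (R : realType) (n m : nat) (u : {ffun 'I_m -> 'I_n}) : R :=
  \sum_(p < n.+1 | prime p && (m < p)%N)
     ln (p%:R : R) *
       (((\sum_(k < m) (1 <= lambda p (Uval u k)) : nat)%N)%:R
        - ((1 <= \max_(k < m) lambda p (Uval u k))%N : nat)%:R).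

Definition Expect (R : realType) (n m : nat) (f : {ffun 'I_m -> 'I_n} -> R) : R :=
  (\sum_(u : {ffun 'I_m -> 'I_n}) f u) / (#|{ffun 'I_m -> 'I_n}|)%:R.

Definition Var (R : realType) (n m : nat) (f : {ffun 'I_m -> 'I_n} -> R) : R :=
  Expect (fun u => (f u - Expect f) ^+ 2).

(* Main.v *)
Require Import Defs.
From HB Require Import structures.
From mathcomp Require Import all_boot all_order all_algebra.
From mathcomp Require Import reals exp.
From mathcomp Require Import zify ring lra.
Set Implicit Arguments. Unset Strict Implicit. Unset Printing Implicit Defensive.
Import Order.TTheory GRing.Theory Num.Theory.
Local Open Scope ring_scope.

Definition updn (T : finType) (m : nat) (u : {ffun 'I_m -> T}) (j : nat) (t : T)
  : {ffun 'I_m -> T} := [ffun i : 'I_m => if val i == j then t else u i].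

Definition avgn (R : realType) (T : finType) (m : nat) (j : nat)
  (g : {ffun 'I_m -> T} -> R) (u : {ffun 'I_m -> T}) : R :=
  (\sum_(t : T) g (updn u j t)) / #|T|%:R.

Definition SumO (R : realType) (T : finType) (m : nat) (g : {ffun 'I_m -> T} -> R) : R :=
  \sum_u g u.

Fixpoint It (R : realType) (T : finType) (m : nat) (j : nat)
  (g : {ffun 'I_m -> T} -> R) : {ffun 'I_m -> T} -> R :=
  if j is j'.+1 then avgn j' (It j' g) else g.

Definition indep (R : realType) (T : finType) (m : nat) (j : nat)
  (g : {ffun 'I_m -> T} -> R) := forall u t, g (updn u j t) = g u.

Lemma updnK (T : finType) m (u : {ffun 'I_m -> T}) j t s :
  updn (updn u j t) j s = updn u j s.
Proof. by apply/ffunP => i; rewrite /updn !ffunE; case: eqP. Qed.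

Lemma updnC (T : finType) m (u : {ffun 'I_m -> T}) i j s t : i != j ->
  updn (updn u i s) j t = updn (updn u j t) i s.
Proof.
move=> ij; apply/ffunP => k; rewrite /updn !ffunE.
case: eqP => [kj|_]; case: eqP => [ki|_] //.
by move: ij; rewrite -kj -ki eqxx.
Qed.

Lemma updn_out (T : finType) m (u : {ffun 'I_m -> T}) j t : (m <= j)%N -> updn u j t = u.
Proof.
move=> mj; apply/ffunP => k; rewrite /updn !ffunE.
case: eqP => // kj; have := ltn_ord k; rewrite kj; lia.
Qed.

Lemma updn_self (T : finType) m (u : {ffun 'I_m -> T}) (k : 'I_m) : updn u k (u k) = u.
Proof. by apply/ffunP => i; rewrite /updn !ffunE; case: eqP => // /val_inj ->. Qed.

Lemma updn_at (T : finType) m (u : {ffun 'I_m -> T}) (k : 'I_m) t : updn u k t k = t.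
Proof. by rewrite /updn ffunE eqxx. Qed.

Lemma avgn_indep (R : realType) (T : finType) m j (g : {ffun 'I_m -> T} -> R) :
  indep j (avgn j g).
Proof. by move=> u t; rewrite /avgn; under eq_bigr do rewrite updnK. Qed.

Lemma avgn_id (R : realType) (T : finType) m j (g : {ffun 'I_m -> T} -> R) :
  (0 < #|T|)%N -> indep j g -> forall u, avgn j g u = g u.
Proof.
move=> T0 gi u; rewrite /avgn; under eq_bigr do rewrite gi.
rewrite sumr_const -[_ *+ _]mulr_natr mulfK // pnatr_eq0 -lt0n //.
Qed.

Lemma avgn_ext (R : realType) (T : finType) m j (g h : {ffun 'I_m -> T} -> R) :
  (forall u, g u = h u) -> forall u, avgn j g u = avgn j h u.
Proof. by move=> e u; rewrite /avgn; under eq_bigr do rewrite e. Qed.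

Lemma avgnD (R : realType) (T : finType) m j (g h : {ffun 'I_m -> T} -> R) u :
  avgn j (fun v => g v + h v) u = avgn j g u + avgn j h u.
Proof. by rewrite /avgn big_split /= mulrDl. Qed.

Lemma avgnB (R : realType) (T : finType) m j (g h : {ffun 'I_m -> T} -> R) u :
  avgn j (fun v => g v - h v) u = avgn j g u - avgn j h u.
Proof. by rewrite /avgn big_split /= sumrN mulrBl. Qed.

Lemma avgnMr (R : realType) (T : finType) m j (g h : {ffun 'I_m -> T} -> R) u :
  indep j h -> avgn j (fun v => g v * h v) u = avgn j g u * h u.
Proof.
move=> hi; rewrite /avgn; under eq_bigr do rewrite hi.
by rewrite -mulr_suml mulrAC.
Qed.

Lemma avgn_indep_other (R : realType) (T : finType) m i j (g : {ffun 'I_m -> T} -> R) :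
  i != j -> indep j g -> indep j (avgn i g).
Proof.
move=> ij gi u t; rewrite /avgn; apply: congr2 => //; apply: eq_bigr => s _.
by rewrite -(updnC _ _ _ ij) gi.
Qed.

Lemma SumO_avgn (R : realType) (T : finType) m j (g : {ffun 'I_m -> T} -> R) :
  (0 < #|T|)%N -> SumO (avgn j g) = SumO g.
Proof.
move=> T0; rewrite /SumO /avgn -mulr_suml.
have TN : (#|T|%:R : R) != 0 by rewrite pnatr_eq0 -lt0n.
apply: (mulIf TN); rewrite divfK //.
rewrite mulr_suml; under [X in _ = X]eq_bigr do rewrite mulr_natr -sumr_const.
case: (ltnP j m) => jm; last first.
  by apply: eq_bigr => u _; apply: eq_bigr => t _; rewrite updn_out.
pose k := Ordinal jm.
rewrite !pair_bigA /=.
pose phi (p : {ffun 'I_m -> T} * T) := (updn p.1 j p.2, p.1 k).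
have phiK : involutive phi.
  move=> [u t]; rewrite /phi /=; congr (_, _).
    rewrite updnK; apply/ffunP => i; rewrite /updn ffunE.
    by case: eqP => // ij; congr (u _); exact: val_inj.
  by rewrite /updn ffunE eqxx.
by rewrite [RHS](reindex_inj (inv_inj phiK)).
Qed.

Lemma jensen_avg (R : realType) (T : finType) (a : T -> R) :
  (0 < #|T|)%N ->
  ((\sum_t a t) / #|T|%:R) ^+ 2 <= (\sum_t a t ^+ 2) / #|T|%:R.
Proof.
move=> T0; set N := (#|T|%:R : R); set mu := (\sum_t a t) / N.
have N0 : 0 < N by rewrite ltr0n.
have h : 0 <= \sum_t (a t - mu) ^+ 2 by apply: sumr_ge0 => t _; exact: sqr_ge0.
have e : \sum_t (a t - mu) ^+ 2 = \sum_t a t ^+ 2 - 2 * mu * (\sum_t a t) + N * mu ^+ 2.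
  rewrite (eq_bigr (fun t => a t ^+ 2 - 2 * mu * a t + mu ^+ 2)); last by move=> t _; ring.
  rewrite big_split big_split /= sumrN -mulr_sumr sumr_const; congr (_ + _).
  by rewrite /N mulr_natl.
have s : \sum_t a t = N * mu by rewrite /mu mulrC divfK // gt_eqF.
rewrite e s in h.
rewrite ler_pdivlMr //.
nra.
Qed.

Lemma avgn_sq (R : realType) (T : finType) m j (g : {ffun 'I_m -> T} -> R) u :
  (0 < #|T|)%N -> (avgn j g u) ^+ 2 <= avgn j (fun v => g v ^+ 2) u.
Proof. by move=> T0; apply: jensen_avg. Qed.

Lemma SumO_le (R : realType) (T : finType) m (g h : {ffun 'I_m -> T} -> R) :
  (forall u, g u <= h u) -> SumO g <= SumO h.
Proof. by move=> H; apply: ler_sum => u _. Qed.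

Lemma SumO_ext (R : realType) (T : finType) m (g h : {ffun 'I_m -> T} -> R) :
  (forall u, g u = h u) -> SumO g = SumO h.
Proof. by move=> H; apply: eq_bigr => u _. Qed.

Lemma It_ext (R : realType) (T : finType) m j (g h : {ffun 'I_m -> T} -> R) :
  (forall u, g u = h u) -> forall u, It j g u = It j h u.
Proof. by elim: j => [|j IH] //= e; apply: avgn_ext => u; apply: IH. Qed.

Lemma ItD (R : realType) (T : finType) m j (g h : {ffun 'I_m -> T} -> R) u :
  It j (fun v => g v + h v) u = It j g u + It j h u.
Proof.
elim: j u => [|j IH] u //=.
by rewrite (avgn_ext _ IH) avgnD.
Qed.

Lemma It_indep (R : realType) (T : finType) m j k (g : {ffun 'I_m -> T} -> R) :
  (j <= k)%N -> indep k g -> indep k (It j g).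
Proof.
elim: j => [|j IH] //= jk gi.
apply: avgn_indep_other; first by rewrite neq_ltn jk.
by apply: IH => //; exact: ltnW.
Qed.

Lemma SumO_It (R : realType) (T : finType) m j (g : {ffun 'I_m -> T} -> R) :
  (0 < #|T|)%N -> SumO (It j g) = SumO g.
Proof. by move=> T0; elim: j => [|j IH] //=; rewrite SumO_avgn. Qed.

Lemma SumO_It_sq (R : realType) (T : finType) m j (g : {ffun 'I_m -> T} -> R) :
  (0 < #|T|)%N -> SumO (fun u => It j g u ^+ 2) <= SumO (fun u => g u ^+ 2).
Proof.
move=> T0; elim: j => [|j IH] //=.
apply: le_trans IH.
rewrite -[X in _ <= X](SumO_avgn j _ T0).
by apply: SumO_le => u; apply: avgn_sq.
Qed.

Lemma It_agree (R : realType) (T : finType) m j (g : {ffun 'I_m -> T} -> R) (u v : {ffun 'I_m -> T}) :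
  (forall i : 'I_m, (j <= val i)%N -> u i = v i) -> It j g u = It j g v.
Proof.
elim: j u v => [|j IH] u v /= H.
  by congr (g _); apply/ffunP => i; apply: H.
rewrite /avgn; congr (_ / _); apply: eq_bigr => t _; apply: IH => i ji.
rewrite /updn !ffunE; case: eqP => // /eqP ij; apply: H; rewrite ltn_neqAle ji andbT.
by rewrite eq_sym.
Qed.

Lemma It_const (R : realType) (T : finType) m (g : {ffun 'I_m -> T} -> R) u :
  (0 < #|T|)%N -> It m g u = SumO g / #|{ffun 'I_m -> T}|%:R.
Proof.
move=> T0.
have C : forall v, It m g v = It m g u.
  by move=> v; apply: It_agree => i; rewrite leqNgt ltn_ord.
have N0 : (#|{ffun 'I_m -> T}|%:R : R) != 0 by rewrite pnatr_eq0 card_ffun -lt0n expn_gt0 T0.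
rewrite -(SumO_It m g T0) /SumO (eq_bigr _ (fun v _ => C v)) sumr_const -[_ *+ _]mulr_natr mulfK //.
Qed.

Lemma pyth_step (R : realType) (T : finType) m j (a : {ffun 'I_m -> T} -> R) (c : R) :
  (0 < #|T|)%N ->
  SumO (fun u => (a u - c) ^+ 2) =
  SumO (fun u => (a u - avgn j a u) ^+ 2) + SumO (fun u => (avgn j a u - c) ^+ 2).
Proof.
move=> T0; set b := avgn j a.
have bi : indep j (fun u => b u - c) by move=> u t; rewrite /b avgn_indep.
have cross : SumO (fun u => (a u - b u) * (b u - c)) = 0.
  rewrite -(SumO_avgn j _ T0); rewrite /SumO; apply: big1 => u _.
  rewrite (avgnMr _ _ bi) avgnB (avgn_id T0 (@avgn_indep R T m j a)).
  by rewrite /b subrr mul0r.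
rewrite /SumO -big_split /=.
rewrite (eq_bigr (fun u => (a u - b u) ^+ 2 + (b u - c) ^+ 2 + 2 * ((a u - b u) * (b u - c)))); last by move=> u _; ring.
by rewrite big_split /= -mulr_sumr; move: cross; rewrite /SumO => ->; rewrite mulr0 addr0.
Qed.

Lemma efron_stein (R : realType) (T : finType) m (f : {ffun 'I_m -> T} -> R)
  (c : nat -> {ffun 'I_m -> T} -> R) :
  (0 < #|T|)%N -> (forall j, (j < m)%N -> indep j (c j)) ->
  SumO (fun u => (f u - SumO f / #|{ffun 'I_m -> T}|%:R) ^+ 2)
  <= \sum_(j < m) SumO (fun u => (f u - c j u) ^+ 2).
Proof.
move=> T0 ci; set mu := SumO f / _.
have step : forall J, (J <= m)%N ->
  SumO (fun u => (f u - mu) ^+ 2) <=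
  \sum_(j < J) SumO (fun u => (f u - c j u) ^+ 2) + SumO (fun u => (It J f u - mu) ^+ 2).
  elim => [|J IH] Jm; first by rewrite big_ord0 add0r.
  apply: le_trans (IH (ltnW Jm)) _.
  rewrite big_ord_recr /= -addrA lerD2l (pyth_step J _ _ T0) /= lerD2r.
  pose G u := f u - c J u.
  have Ei : forall u, It J f u = It J G u + It J (c J) u.
    by move=> u; rewrite -ItD; apply: It_ext => v; rewrite /G subrK.
  have ciJ : indep J (It J (c J)) by apply: It_indep => //; exact: ci.
  have E : forall u, It J f u - avgn J (It J f) u = It J G u - avgn J (It J G) u.
    move=> u; rewrite Ei (avgn_ext _ Ei) avgnD (avgn_id T0 ciJ); ring.
  rewrite (SumO_ext (fun u => congr1 (fun x => x ^+ 2) (E u))).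
  apply: le_trans (SumO_It_sq J G T0).
  have := pyth_step J (It J G) 0 T0.
  under [X in X = _ -> _]SumO_ext do rewrite subr0.
  move=> ->; rewrite lerDl /SumO; apply: sumr_ge0 => u _; exact: sqr_ge0.
apply: le_trans (step m (leqnn m)) _.
have -> : SumO (fun u => (It m f u - mu) ^+ 2) = 0.
  by rewrite /SumO big1 // => u _; rewrite It_const // /mu subrr expr0n.
by rewrite addr0.
Qed.

Definition avgT (R : realType) (T : finType) (g : T -> R) : R := (\sum_t g t) / #|T|%:R.

Lemma prod_formula (R : realType) (T : finType) m (G : 'I_m -> T -> R) :
  SumO (fun u : {ffun 'I_m -> T} => \prod_i G i (u i)) / #|{ffun 'I_m -> T}|%:R
  = \prod_i avgT (G i).
Proof.
rewrite /SumO /avgT prodf_div -bigA_distr_bigA /=; congr (_ / _).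
by rewrite card_ffun natrX prodr_const card_ord.
Qed.

Lemma prod2 (R : realType) m (F : 'I_m -> R) (k i : 'I_m) : k != i ->
  (forall j, j != k -> j != i -> F j = 1) -> \prod_j F j = F k * F i.
Proof.
move=> ki H; rewrite (bigD1 k) //= (bigD1 i) 1?eq_sym //= big1 ?mulr1 // => j /andP [jk ji].
exact: H.
Qed.

Lemma prod3 (R : realType) m (F : 'I_m -> R) (k i l : 'I_m) : k != i -> k != l -> i != l ->
  (forall j, j != k -> j != i -> j != l -> F j = 1) -> \prod_j F j = F k * F i * F l.
Proof.
move=> ki kl il H; rewrite (bigD1 k) //= (bigD1 i) 1?eq_sym //= (bigD1 l) /=; last first.
  by rewrite (eq_sym l k) (eq_sym l i) kl il.
rewrite big1 ?mulr1 ?mulrA // => j /andP [/andP [jk ji] jl]; exact: H.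
Qed.

Lemma avgT1 (R : realType) (T : finType) : (0 < #|T|)%N -> avgT (fun _ : T => (1 : R)) = 1.
Proof.
move=> T0; rewrite /avgT sumr_const divff // pnatr_eq0 -lt0n //.
Qed.

Lemma E2 (R : realType) (T : finType) m (g h : T -> R) (k i : 'I_m) :
  (0 < #|T|)%N -> k != i ->
  SumO (fun u : {ffun 'I_m -> T} => g (u k) * h (u i)) / #|{ffun 'I_m -> T}|%:R
  = avgT g * avgT h.
Proof.
move=> T0 ki.
pose G (j : 'I_m) := if j == k then g else if j == i then h else (fun _ => 1 : R).
have e : forall u : {ffun 'I_m -> T}, g (u k) * h (u i) = \prod_j G j (u j).
  move=> u; rewrite (@prod2 R m (fun j => G j (u j)) k i) //.
    by rewrite /G eqxx eq_sym (negbTE ki) eqxx.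
  by move=> j jk ji; rewrite /G (negbTE jk) (negbTE ji).
rewrite (SumO_ext e) prod_formula (@prod2 R m (fun j => avgT (G j)) k i) //.
  by rewrite /G eqxx eq_sym (negbTE ki) eqxx.
by move=> j jk ji; rewrite /G (negbTE jk) (negbTE ji) avgT1.
Qed.

Lemma E3 (R : realType) (T : finType) m (g h r : T -> R) (k i l : 'I_m) :
  (0 < #|T|)%N -> k != i -> k != l -> i != l ->
  SumO (fun u : {ffun 'I_m -> T} => g (u k) * (h (u i) * r (u l))) / #|{ffun 'I_m -> T}|%:R
  = avgT g * avgT h * avgT r.
Proof.
move=> T0 ki kl il.
pose G (j : 'I_m) := if j == k then g else if j == i then h else if j == l then r
  else (fun _ => 1 : R).
have e : forall u : {ffun 'I_m -> T}, g (u k) * (h (u i) * r (u l)) = \prod_j G j (u j).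
  move=> u; rewrite (@prod3 R m (fun j => G j (u j)) k i l) //.
    by rewrite /G eqxx eq_sym (negbTE ki) eqxx eq_sym (negbTE kl) eq_sym (negbTE il) eqxx mulrA.
  by move=> j jk ji jl; rewrite /G (negbTE jk) (negbTE ji) (negbTE jl).
rewrite (SumO_ext e) prod_formula (@prod3 R m (fun j => avgT (G j)) k i l) //.
  by rewrite /G eqxx eq_sym (negbTE ki) eqxx eq_sym (negbTE kl) eq_sym (negbTE il) eqxx.
by move=> j jk ji jl; rewrite /G (negbTE jk) (negbTE ji) (negbTE jl) avgT1.
Qed.

Definition ind (R : realType) n (d : nat) (t : 'I_n) : R := (d %| (val t).+1)%N%:R.

Lemma count_mult n d : (0 < d)%N -> (\sum_(t < n) (d %| t.+1) = n %/ d)%N.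
Proof.
move=> d0; elim: n => [|n IH]; first by rewrite big_ord0 div0n.
by rewrite big_ord_recr /= IH divnS // addnC.
Qed.

Lemma avg_ind (R : realType) n d : (0 < n)%N -> (0 < d)%N ->
  0 <= avgT (@ind R n d) <= d%:R^-1.
Proof.
move=> n0 d0; rewrite /avgT /ind -natr_sum card_ord.
rewrite (count_mult n d0) divr_ge0 ?ler0n //=.
have N0 : (0 : R) < n%:R by rewrite ltr0n.
have D0 : (0 : R) < d%:R by rewrite ltr0n.
rewrite ler_pdivrMr // -(ler_pM2l D0) mulrA mulfV ?gt_eqF // mul1r.
by rewrite -natrM ler_nat mulnC leq_trunc_div.
Qed.

Lemma ind_mul (R : realType) n p q (t : 'I_n) : prime p -> prime q -> p != q ->
  @ind R n p t * @ind R n q t = @ind R n (p * q) t.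
Proof.
move=> pp pq pq'; rewrite /ind -natrM Gauss_dvd; last first.
  by rewrite prime_coprime // dvdn_prime2.
by case: (p %| _)%N; case: (q %| _)%N.
Qed.

Definition EE (R : realType) (T : finType) m (g : {ffun 'I_m -> T} -> R) : R :=
  SumO g / #|{ffun 'I_m -> T}|%:R.

Lemma EE_sum (R : realType) (T : finType) m (I : Type) (r : seq I) (P : pred I)
  (F : I -> {ffun 'I_m -> T} -> R) :
  EE (fun u => \sum_(x <- r | P x) F x u) = \sum_(x <- r | P x) EE (F x).
Proof. by rewrite /EE /SumO exchange_big mulr_suml. Qed.

Lemma EE_le (R : realType) (T : finType) m (g h : {ffun 'I_m -> T} -> R) :
  (forall u, g u <= h u) -> EE g <= EE h.
Proof.
move=> H; rewrite /EE ler_wpM2r ?invr_ge0 ?ler0n //; exact: SumO_le.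
Qed.

Lemma EE_scale (R : realType) (T : finType) m (c : R) (g : {ffun 'I_m -> T} -> R) :
  EE (fun u => c * g u) = c * EE g.
Proof. by rewrite /EE /SumO -mulr_sumr mulrA. Qed.

Lemma sum_ge_term (R : realType) (I : finType) (P : pred I) (F : I -> R) i :
  P i -> (forall j, P j -> 0 <= F j) -> F i <= \sum_(j | P j) F j.
Proof.
move=> Pi F0; rewrite (bigD1 i) //= lerDl; apply: sumr_ge0 => j /andP [Pj _]; exact: F0.
Qed.

Lemma sum_le_card (R : realType) m (P : pred 'I_m) (F : 'I_m -> R) c :
  0 <= c -> (forall i, P i -> F i <= c) -> \sum_(i < m | P i) F i <= m%:R * c.
Proof.
move=> c0 H; apply: (@le_trans _ _ (\sum_(i < m) c)).
  rewrite big_mkcond /=; apply: ler_sum => i _; case: ifP => Pi //; exact: H.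
by rewrite sumr_const card_ord mulr_natl.
Qed.

Definition bt n m (u : {ffun 'I_m -> 'I_n}) (k : 'I_m) (p : nat) : bool :=
  (p %| (u k).+1)%N.
Definition et n m (u : {ffun 'I_m -> 'I_n}) (k : 'I_m) (p : nat) : bool :=
  [exists i, (i != k) && (p %| (u i).+1)%N].
Definition aa (R : realType) n m (u : {ffun 'I_m -> 'I_n}) (k : 'I_m) (p : nat) : R :=
  (bt u k p && et u k p)%:R.

Lemma ind_ge0 (R : realType) n d (t : 'I_n) : 0 <= @ind R n d t.
Proof. by rewrite /ind ler0n. Qed.

Lemma pw1 (R : realType) n m (u : {ffun 'I_m -> 'I_n}) k p :
  @aa R n m u k p * @aa R n m u k p <= \sum_(i < m | i != k) @ind R n p (u k) * @ind R n p (u i).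
Proof.
rewrite /aa; case: andP => [[b /existsP [i /andP [ik di]]]|_]; last first.
  by rewrite mul0r; apply: sumr_ge0 => i _; rewrite mulr_ge0 ?ind_ge0.
apply: le_trans (sum_ge_term (P := fun j => j != k) (F := fun j => @ind R n p (u k) * @ind R n p (u j)) ik _).
  by rewrite /ind; move: b; rewrite /bt => -> ; rewrite di.
by move=> j _; rewrite mulr_ge0 ?ind_ge0.
Qed.

Lemma pw2 (R : realType) n m (u : {ffun 'I_m -> 'I_n}) k p q :
  prime p -> prime q -> p != q ->
  @aa R n m u k p * @aa R n m u k q <=
  \sum_(i < m | i != k) \sum_(i' < m | i' != k)
     @ind R n (p * q) (u k) * (@ind R n p (u i) * @ind R n q (u i')).
Proof.
move=> pp pq pnq.
have F0 : forall i i', 0 <= @ind R n (p * q) (u k) * (@ind R n p (u i) * @ind R n q (u i')).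
  by move=> i i'; rewrite !mulr_ge0 ?ind_ge0.
rewrite /aa; case: andP => [[b1 /existsP [i /andP [ik di]]]|_]; last first.
  by rewrite mul0r; apply: sumr_ge0 => j _; apply: sumr_ge0 => j' _.
case: andP => [[b2 /existsP [i' /andP [ik' di']]]|_]; last first.
  by rewrite mulr0; apply: sumr_ge0 => j _; apply: sumr_ge0 => j' _.
apply: le_trans (sum_ge_term (P := fun j => j != k) (F := fun j => \sum_(i' < m | i' != k)
     @ind R n (p * q) (u k) * (@ind R n p (u j) * @ind R n q (u i'))) ik _); last first.
  by move=> j _; apply: sumr_ge0 => j' _.
apply: le_trans (sum_ge_term (P := fun j => j != k) (F := fun j' =>
     @ind R n (p * q) (u k) * (@ind R n p (u i) * @ind R n q (u j'))) ik' _); last first.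
  by move=> j _.
rewrite -ind_mul // /ind di di'; move: b1 b2; rewrite /bt => -> ->.
by rewrite !mulr1.
Qed.

Lemma T2bound (R : realType) n m (k i : 'I_m) d : (0 < n)%N -> (0 < d)%N -> k != i ->
  EE (fun u : {ffun 'I_m -> 'I_n} => @ind R n d (u k) * @ind R n d (u i)) <= (d%:R ^+ 2)^-1.
Proof.
move=> n0 d0 ki.
have T0 : (0 < #|'I_n|)%N by rewrite card_ord.
rewrite /EE E2 //.
have [a0 a1] := andP (@avg_ind R n d n0 d0).
by rewrite expr2 invfM ler_pM.
Qed.

Lemma T3bound (R : realType) n m (k i i' : 'I_m) p q : (0 < n)%N ->
  prime p -> prime q -> p != q -> k != i -> k != i' ->
  EE (fun u : {ffun 'I_m -> 'I_n} =>
     @ind R n (p * q) (u k) * (@ind R n p (u i) * @ind R n q (u i')))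
  <= (p%:R ^+ 2 * q%:R ^+ 2)^-1.
Proof.
move=> n0 pp pq pnq ki ki'.
have T0 : (0 < #|'I_n|)%N by rewrite card_ord.
have p0 := prime_gt0 pp; have q0 := prime_gt0 pq.
have pq0 : (0 < p * q)%N by rewrite muln_gt0 p0.
have [a0 a1] := andP (@avg_ind R n (p * q) n0 pq0).
have [b0 b1] := andP (@avg_ind R n p n0 p0).
have [c0 c1] := andP (@avg_ind R n q n0 q0).
have E : ((p%:R : R) ^+ 2 * q%:R ^+ 2)^-1 = (p * q)%N%:R^-1 * (p%:R^-1 * q%:R^-1).
  by rewrite natrM !expr2 !invfM; ring.
case: (eqVneq i i') => [<-|ii'].
  rewrite /EE.
  under SumO_ext do rewrite ind_mul //.
  rewrite E2 // E -invfM -natrM.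
  by apply: ler_pM.
rewrite /EE E3 // E -mulrA.
apply: ler_pM => //; first by rewrite mulr_ge0.
by apply: ler_pM.
Qed.

Lemma pair_bound (R : realType) n m (k : 'I_m) p q : (0 < n)%N -> prime p -> prime q ->
  EE (fun u : {ffun 'I_m -> 'I_n} => @aa R n m u k p * @aa R n m u k q)
  <= (p == q)%:R * (m%:R / p%:R ^+ 2) + m%:R ^+ 2 / (p%:R ^+ 2 * q%:R ^+ 2).
Proof.
move=> n0 pp pq.
have p0 := prime_gt0 pp; have q0 := prime_gt0 pq.
have P0 : (0 : R) < p%:R by rewrite ltr0n.
have Q0 : (0 : R) < q%:R by rewrite ltr0n.
have m0 : (0 : R) <= m%:R by rewrite ler0n.
case: (eqVneq p q) => [<-|pnq].
  have X0 : 0 <= (m%:R : R) ^+ 2 / (p%:R ^+ 2 * p%:R ^+ 2).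
    by rewrite divr_ge0 ?exprn_ge0 // mulr_ge0 // exprn_ge0 // ltW.
  rewrite /= mul1r; apply: (@le_trans _ _ (m%:R / p%:R ^+ 2)); last by rewrite lerDl.
  apply: le_trans (EE_le (fun u => pw1 R u k p)) _.
  rewrite EE_sum.
  apply: sum_le_card; first by rewrite invr_ge0 exprn_ge0 // ltW.
  by move=> i ik; apply: T2bound => //; rewrite eq_sym.
rewrite /= mul0r add0r.
apply: le_trans (EE_le (fun u => pw2 R u k pp pq pnq)) _.
rewrite EE_sum.
rewrite [in X in _ <= X]expr2 -mulrA.
apply: sum_le_card; first by rewrite mulr_ge0 // invr_ge0 mulr_ge0 // exprn_ge0 // ltW.
move=> i ik; rewrite EE_sum.
apply: sum_le_card; first by rewrite invr_ge0 mulr_ge0 // exprn_ge0 // ltW.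
by move=> i' ik'; apply: T3bound => //; rewrite eq_sym.
Qed.

Lemma EE_ext (R : realType) (T : finType) m (g h : {ffun 'I_m -> T} -> R) :
  (forall u, g u = h u) -> EE g = EE h.
Proof. by move=> H; rewrite /EE (SumO_ext H). Qed.

Definition Ak (R : realType) n m (k : 'I_m) (u : {ffun 'I_m -> 'I_n}) : R :=
  \sum_(p < n.+1 | prime p && (m < p)%N) ln (p%:R : R) * @aa R n m u k p.

Definition S1 (R : realType) n m : R :=
  \sum_(p < n.+1 | prime p && (m < p)%N) ln (p%:R : R) ^+ 2 / p%:R ^+ 2.
Definition S2 (R : realType) n m : R :=
  \sum_(p < n.+1 | prime p && (m < p)%N) ln (p%:R : R) / p%:R ^+ 2.

Lemma EAk2 (R : realType) n m (k : 'I_m) : (0 < n)%N ->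
  EE (fun u => @Ak R n m k u ^+ 2) <= m%:R * S1 R n m + m%:R ^+ 2 * S2 R n m ^+ 2.
Proof.
move=> n0.
rewrite /Ak.
under EE_ext => u do rewrite expr2 big_distrlr /=.
rewrite EE_sum.
under eq_bigr do rewrite EE_sum.
set F := fun (p q : 'I_n.+1) => (ln (p%:R : R) * ln (q%:R : R)) *
   ((val p == val q)%:R * (m%:R / p%:R ^+ 2) + m%:R ^+ 2 / (p%:R ^+ 2 * q%:R ^+ 2)).
apply: (@le_trans _ _ (\sum_(p < n.+1 | prime p && (m < p)%N) \sum_(q < n.+1 | prime q && (m < q)%N) F p q)).
  apply: ler_sum => p /andP [pp _]; apply: ler_sum => q /andP [pq _].
  under EE_ext => u do rewrite mulrACA.
  rewrite EE_scale; apply: ler_wpM2l; last exact: pair_bound.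
  by rewrite mulr_ge0 // ln_ge0 // ler1n prime_gt0.
rewrite /F.
under eq_bigr => p _ do under eq_bigr => q _ do rewrite mulrDr.
under eq_bigr => p _ do rewrite big_split /=.
rewrite big_split /=; apply: lerD.
  rewrite /S1 mulr_sumr le_eqVlt; apply/orP; left; apply/eqP; apply: eq_bigr => p Pp.
  rewrite (bigD1 p) //= eqxx big1 ?addr0; last first.
    move=> q /andP [_ qp]; rewrite (_ : (val p == val q) = false) ?mul0r ?add0r ?mulr0 //.
    by apply/negbTE; rewrite eq_sym.
  by rewrite mul1r; field; rewrite pnatr_eq0 -lt0n prime_gt0 //; case/andP: Pp.
rewrite /S2 (expr2 (\sum_(p < n.+1 | prime p && (m < p)%N) ln (p%:R : R) / p%:R ^+ 2)).
rewrite big_distrlr /= mulr_sumr le_eqVlt; apply/orP; left; apply/eqP.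
apply: eq_bigr => p Pp; rewrite mulr_sumr; apply: eq_bigr => q Pq.
have p0 : (p%:R : R) != 0 by rewrite pnatr_eq0 -lt0n prime_gt0 //; case/andP: Pp.
have q0 : (q%:R : R) != 0 by rewrite pnatr_eq0 -lt0n prime_gt0 //; case/andP: Pq.
by field; rewrite p0 q0.
Qed.

Lemma lam_iff p x : prime p -> (1 <= lambda p x.+1)%N = (p %| x.+1)%N.
Proof. by move=> pp; rewrite /lambda logn_gt0 mem_primes pp. Qed.

Lemma ex_split m (P : pred 'I_m) (k : 'I_m) :
  [exists i, P i] = P k || [exists i, (i != k) && P i].
Proof.
apply/existsP/orP => [[i Pi]|[Pk|/existsP [i /andP [_ Pi]]]].
- by case: (eqVneq i k) => [<-|ik]; [left|right; apply/existsP; exists i; rewrite ik].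
- by exists k.
- by exists i.
Qed.

Lemma max_iff m n p (u : {ffun 'I_m -> 'I_n}) : prime p ->
  (1 <= \max_(k < m) lambda p (Uval u k))%N = [exists k, p %| (u k).+1]%N.
Proof.
move=> pp; apply/idP/existsP => [h|[k hk]].
  apply/existsP/negP => /existsP nex.
  move: h; rewrite big1 // => i _; apply/eqP; rewrite -leqn0 leqNgt /Uval lam_iff //.
  by apply/negP => hi; apply: nex; exists i.
apply: leq_trans (leq_bigmax k); by rewrite /Uval lam_iff.
Qed.

Lemma Xdiff (R : realType) n m (u : {ffun 'I_m -> 'I_n}) (k : 'I_m) (t0 : 'I_n) :
  val t0 = 0%N -> @Xsum R n m u - @Xsum R n m (updn u k t0) = @Ak R n m k u.
Proof.
move=> t00; rewrite /Xsum /Ak -sumrB; apply: eq_bigr => p /andP [pp _].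
rewrite -mulrBr; congr (_ * _).
rewrite !max_iff //.
rewrite (eq_bigr (fun i => (p %| (u i).+1)%N : nat)); last by move=> i _; rewrite /Uval lam_iff.
rewrite [X in _ - (X%:R - _)](eq_bigr (fun i => (p %| ((updn u k t0) i).+1)%N : nat)); last first.
  by move=> i _; rewrite /Uval lam_iff.
rewrite (bigD1 k) //= [X in _ - (X%:R - _)](bigD1 k) //=.
rewrite (ex_split (fun i => (p %| (u i).+1)%N) k).
rewrite (ex_split (fun i => (p %| (updn u k t0 i).+1)%N) k) /=.
have e1 : forall i, i != k -> updn u k t0 i = u i.
  by move=> i ik; rewrite /updn ffunE (_ : (val i == val k) = false) //; apply/negbTE.
rewrite [X in _ - ((_ + X)%:R - _)](eq_bigr (fun i => (p %| (u i).+1)%N : nat)); last first.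
  by move=> i ik; rewrite e1.
have -> : [exists i, (i != k) && (p %| (updn u k t0 i).+1)%N] = [exists i, (i != k) && (p %| (u i).+1)%N].
  by apply: eq_existsb => i; case: (eqVneq i k) => // ik; rewrite e1.
have -> : (p %| (updn u k t0 k).+1)%N = false.
  by rewrite /updn ffunE eqxx t00 dvdn1; apply/negbTE; rewrite neq_ltn prime_gt1 ?orbT.
rewrite /aa /bt /et.
case: (p %| (u k).+1)%N; case: [exists i, _]; rewrite /= !natrD; ring.
Qed.
Lemma prod_primes_dvd (N K : nat) (P : pred nat) :
  (forall p, P p -> prime p /\ (p %| N)%N) -> (\prod_(p < K | P p) p %| N)%N.
Proof.
move=> H; elim: K => [|K IH]; first by rewrite big_ord0 dvd1n.
rewrite big_mkcond big_ord_recr /= -big_mkcond /=.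
case PK: (P K); last by rewrite muln1.
have [pK dK] := H K PK.
rewrite mulnC Gauss_dvd ?dK ?IH // prime_coprime // Euclid_dvd_prod //.
apply: (big_ind (fun b : bool => ~~ b)) => //; first by move=> [] [].
move=> i /H [pi _]; apply/negP => /dvdn_leq.
rewrite prime_gt0 // => /(_ isT); rewrite leqNgt ltn_ord.
by [].
Qed.

Lemma coprime_fact p x : prime p -> (x < p)%N -> coprime p x`!.
Proof.
move=> pp; elim: x => [|x IH] lt; first by rewrite fact0 coprimen1.
rewrite factS coprimeMr IH ?andbT; last by lia.
rewrite prime_coprime //; apply/negP => /dvdn_leq => /(_ isT); lia.
Qed.

Lemma cheb_nat (x K : nat) :
  (\prod_(p < K | prime p && (x < p <= 2 * x)) p <= 4 ^ x)%N.
Proof.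
apply: (@leq_trans 'C(2 * x, x)).
  apply: dvdn_leq; first by rewrite bin_gt0; lia.
  apply: (@prod_primes_dvd _ _ (fun p => prime p && (x < p <= 2 * x)%N)) => p /andP [pp /andP [lo hi]]; split => //.
  have hx : (x <= 2 * x)%N by lia.
  have := bin_fact hx; have -> : (2 * x - x = x)%N by lia.
  move=> E.
  have : (p %| (2 * x)`!)%N by apply: dvdn_fact; rewrite hi andbT prime_gt0.
  rewrite -E Gauss_dvdl //.
  by rewrite coprimeMr coprime_fact.
have : (2 ^ (2 * x) = \sum_(i < (2 * x).+1) 'C(2 * x, i))%N.
  have := expnDn 1 1 (2 * x); rewrite add1n => ->.
  by apply: eq_bigr => i _; rewrite !exp1n !muln1.
rewrite expnM /= => ->.
have hx : (x < (2 * x).+1)%N by lia.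
by rewrite (bigD1 (Ordinal hx)) //= leq_addr.
Qed.

Lemma ln_prod_nat (R : realType) (I : Type) (r : seq I) (P : pred I) (f : I -> nat) :
  (forall i, P i -> 0 < f i)%N ->
  ln ((\prod_(i <- r | P i) f i)%N%:R : R) = \sum_(i <- r | P i) ln ((f i)%:R : R).
Proof.
move=> H.
pose K (a : nat) (b : R) := (0 < a)%N /\ ln (a%:R : R) = b.
suff [] : K (\prod_(i <- r | P i) f i)%N (\sum_(i <- r | P i) ln ((f i)%:R : R)) by [].
apply: (big_ind2 K).
- by split => //; rewrite ln1.
- move=> a1 b1 a2 b2 [h1 e1] [h2 e2]; split; first by rewrite muln_gt0 h1 h2.
  by rewrite natrM lnM ?e1 ?e2 // posrE ltr0n.
- by move=> i Pi; split; [apply: H|].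
Qed.

Lemma cheb (R : realType) (x K : nat) :
  \sum_(p < K | prime p && (x < p <= 2 * x)%N) ln (p%:R : R) <= x%:R * ln 4.
Proof.
rewrite -ln_prod_nat; last by move=> i /andP [/prime_gt0].
have pos : (0 < \prod_(p < K | prime p && (x < p <= 2 * x)) p)%N.
  by apply: (big_ind (fun a => 0 < a)%N) => // [a b ha hb|i /andP [/prime_gt0]]; rewrite ?muln_gt0 ?ha.
apply: (@le_trans _ _ (ln ((4 ^ x)%N%:R : R))).
  by rewrite ler_ln ?posrE ?ltr0n ?expn_gt0 // ler_nat cheb_nat.
by rewrite natrX lnXn // mulr_natl.
Qed.

Lemma geom (R : realType) (J : nat) :
  \sum_(j < J) (j.+2)%:R / (2 : R) ^+ j = 6 - (2 * J + 6)%:R / 2 ^+ J.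
Proof.
elim: J => [|J IH]; first by rewrite big_ord0 expr0 divr1 muln0 add0n; lra.
rewrite big_ord_recr /= IH exprS.
have h : (2 : R) ^+ J != 0 by apply: expf_neq0; rewrite pnatr_eq0.
rewrite !natrD !natrM /=. field.
by rewrite h.
Qed.

Lemma find_block (m p J : nat) : (m < p)%N -> (p <= 2 ^ J * m)%N ->
  exists2 j, (j < J)%N & (2 ^ j * m < p <= 2 * (2 ^ j * m))%N.
Proof.
move=> lo; elim: J => [|J IH] hi.
  by rewrite expn0 mul1n in hi; lia.
case: (leqP p (2 ^ J * m)) => h.
  by have [j jJ hj] := IH h; exists j => //; lia.
exists J => //; rewrite h /= mulnA -expnS; lia.
Qed.

Lemma split_blocks (R : realType) (K J : nat) (Q : pred nat) (B : nat -> pred nat)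
  (f : nat -> R) :
  (forall p, Q p -> 0 <= f p) ->
  (forall p, (p < K)%N -> Q p -> exists2 j, (j < J)%N & B j p) ->
  \sum_(p < K | Q p) f p <= \sum_(j < J) \sum_(p < K | Q p && B j p) f p.
Proof.
move=> f0 ex.
rewrite [X in _ <= X](eq_bigr (fun j : 'I_J => \sum_(p < K) if Q p && B j p then f p else 0)); last by move=> j _; rewrite big_mkcond.
rewrite exchange_big /= big_mkcond /=.
apply: ler_sum => p _.
case Qp: (Q p); last by rewrite big1.
have [j jJ Bj] := ex p (ltn_ord p) Qp.
rewrite (bigD1 (Ordinal jJ)) //= Bj /= lerDl.
by apply: sumr_ge0 => i _; case: ifP => // _; apply: f0.
Qed.

Lemma ln_pow2m (R : realType) j m : (0 < m)%N ->
  ln (((2 * (2 ^ j * m))%N)%:R : R) = (j.+1)%:R * ln 2 + ln (m%:R).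
Proof.
move=> m0; rewrite mulnA -expnS natrM natrX lnM ?posrE ?exprn_gt0 ?ltr0n //.
by rewrite lnXn // mulr_natl.
Qed.

Lemma block (R : realType) (m n j : nat) : (2 <= m)%N ->
  \sum_(p < n.+1 | prime p && (2 ^ j * m < p <= 2 * (2 ^ j * m))%N)
     ln (p%:R : R) ^+ 2 / (p%:R) ^+ 2
  <= ln 4 * (j.+2)%:R * ln (m%:R : R) / (2 ^+ j * m%:R).
Proof.
move=> m2.
set x := (2 ^ j * m)%N.
have x0 : (0 < x)%N by rewrite /x muln_gt0 expn_gt0 /=; lia.
have X0 : (0 : R) < x%:R by rewrite ltr0n.
set L := ln ((2 * x)%:R : R).
apply: (@le_trans _ _ (\sum_(p < n.+1 | prime p && (x < p <= 2 * x)%N) ln (p%:R : R) * (L / x%:R ^+ 2))).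
  apply: ler_sum => p /andP [pp /andP [lo hi]].
  have p0 : (0 : R) < p%:R by rewrite ltr0n prime_gt0.
  have lp0 : 0 <= ln (p%:R : R) by apply: ln_ge0; rewrite ler1n prime_gt0.
  rewrite expr2 -mulrA; apply: ler_wpM2l => //.
  apply: ler_pM => //.
  - by rewrite invr_ge0 exprn_ge0 // ltW.
  - have hp : (0 < p)%N := prime_gt0 pp.
    have h2x : (0 < 2 * x)%N by lia.
    by rewrite /L ler_ln ?posrE ?ltr0n // ler_nat.
  - rewrite lef_pV2 ?posrE ?exprn_gt0 //.
    have : (x%:R : R) <= p%:R by rewrite ler_nat ltnW.
    move=> h; rewrite !expr2; apply: ler_pM => //; exact: ltW.
rewrite -mulr_suml.
apply: (@le_trans _ _ (x%:R * ln 4 * (L / x%:R ^+ 2))).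
  apply: ler_wpM2r; last exact: cheb.
  rewrite divr_ge0 ?exprn_ge0 ?ltW //.
  by rewrite /L; apply: ln_gt0; rewrite ltr1n; lia.
have LL : L <= (j.+2)%:R * ln (m%:R : R).
  rewrite /L /x ln_pow2m; last by lia.
  have : ln (2 : R) <= ln (m%:R : R) by rewrite ler_ln ?posrE ?ltr0n ?ler_nat //; lia.
  have l20 : 0 <= ln (2 : R) by apply: ln_ge0; lra.
  rewrite -[(j.+2)%:R]natr1 -[(j.+1)%:R]natr1 => h.
  set a := (j%:R : R). have a0 : 0 <= a by rewrite ler0n.
  nra.
have -> : (2 ^+ j * m%:R : R) = x%:R by rewrite /x natrM natrX.
have l40 : 0 <= ln (4 : R) by apply: ln_ge0; lra.
rewrite expr2 [x%:R * ln 4]mulrC -!mulrA.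
apply: ler_wpM2l => //.
have xn0 : (x%:R : R) != 0 by rewrite gt_eqF.
have -> : x%:R * (L / (x%:R * x%:R)) = L / x%:R by field.
by rewrite mulrA ler_pM2r ?invr_gt0.
Qed.

Lemma S1bound (R : realType) (m n : nat) : (2 <= m)%N ->
  \sum_(p < n.+1 | prime p && (m < p)%N) ln (p%:R : R) ^+ 2 / (p%:R) ^+ 2
  <= 6 * ln 4 * ln (m%:R : R) / m%:R.
Proof.
move=> m2.
apply: le_trans (@split_blocks R n.+1 n (fun p => prime p && (m < p)%N)
   (fun j p => (2 ^ j * m < p <= 2 * (2 ^ j * m))%N) (fun p => ln (p%:R : R) ^+ 2 / (p%:R) ^+ 2) _ _) _.
- by move=> p _; apply: divr_ge0; exact: sqr_ge0.
- move=> p pn /andP [pp mp]; apply: find_block => //.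
  have := ltn_expl n (isT : (1 < 2)%N).
  have : (2 ^ n <= 2 ^ n * m)%N by rewrite leq_pmulr; lia.
  lia.
apply: (@le_trans _ _ (\sum_(j < n) ln 4 * (j.+2)%:R * ln (m%:R : R) / (2 ^+ j * m%:R))).
  apply: ler_sum => j _.
  apply: le_trans (block R n j m2).
  rewrite le_eqVlt; apply/orP; left; apply/eqP; apply: eq_bigl => p /=.
  have : (m <= 2 ^ j * m)%N by rewrite leq_pmull ?expn_gt0.
  case: (prime p) => //= h.
  case: (ltnP m p) => h2 /=; first by [].
  by apply/esym/negbTE/negP => /andP [h3 h4]; lia.
have m0 : (m%:R : R) != 0 by rewrite pnatr_eq0; lia.
have E : forall j : 'I_n, ln 4 * (j.+2)%:R * ln (m%:R : R) / (2 ^+ j * m%:R)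
   = (ln 4 * ln (m%:R : R) / m%:R) * ((j.+2)%:R / 2 ^+ j).
  move=> j; have : (2 : R) ^+ j != 0 by apply: expf_neq0; rewrite pnatr_eq0.
  move=> h; field; by rewrite h m0.
under eq_bigr do rewrite E.
rewrite -mulr_sumr geom.
have c0 : 0 <= ln 4 * ln (m%:R : R) / m%:R.
  rewrite divr_ge0 ?ler0n // mulr_ge0 //; apply: ln_ge0; rewrite ?ler1n; lra || lia.
have d0 : 0 <= (2 * n + 6)%:R / (2 : R) ^+ n by rewrite divr_ge0 ?ler0n ?exprn_ge0.
have -> : 6 * ln 4 * ln (m%:R : R) / m%:R = (ln 4 * ln (m%:R : R) / m%:R) * 6 by ring.
apply: ler_wpM2l => //; lra.
Qed.

Lemma S2_le (R : realType) n m : (2 <= m)%N ->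
  S2 R n m <= S1 R n m / ln (m%:R : R).
Proof.
move=> m2.
have L0 : (0 : R) < ln (m%:R : R) by apply: ln_gt0; rewrite ltr1n.
rewrite /S1 /S2 mulr_suml; apply: ler_sum => p /andP [pp mp].
have P0 : (0 : R) < p%:R by rewrite ltr0n prime_gt0.
have lp0 : 0 <= ln (p%:R : R) by apply: ln_ge0; rewrite ler1n prime_gt0.
have lmp : ln (m%:R : R) <= ln (p%:R : R).
  have mp' : (m <= p)%N by exact: ltnW.
  have m0 : (0 < m)%N by exact: ltnW.
  have p0 : (0 < p)%N by exact: prime_gt0.
  by rewrite ler_ln ?posrE ?ltr0n ?ler_nat.
rewrite ler_pdivlMr // mulrAC ler_pM2r ?invr_gt0 ?exprn_gt0 //.
by rewrite expr2 ler_wpM2l.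
Qed.


Unset Implicit Arguments.

Theorem lemma6p3 (R : realType) (mn : nat -> nat)
  (Hinf : forall M : nat, exists N : nat, forall n : nat, (N <= n)%N -> (M <= mn n)%N)
  (Hsmall : forall eps : R, 0 < eps ->
     exists N : nat, forall n : nat, (N <= n)%N -> (mn n)%:R <= eps * n%:R) :
  exists C : R, exists N : nat, forall n : nat, (N <= n)%N ->
    `| Var (@Xsum R n (mn n)) | <= C * ((mn n)%:R * ln ((mn n)%:R : R)).
Proof.
pose C1 : R := 6 * ln 4.
have l3 : (0 : R) < ln 3 by apply: ln_gt0; lra.
exists (C1 + C1 ^+ 2 / ln 3).
have [N HN] := Hinf 3%N.
exists (N + 1)%N => n Nn.
have m3 : (3 <= mn n)%N by apply: HN; lia.
have n0 : (0 < n)%N by lia.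
move: m3; set m := mn n => m3.
have T0 : (0 < #|'I_n|)%N by rewrite card_ord.
pose t0 : 'I_n := Ordinal n0.
pose X := @Xsum R n m.
pose M : R := #|{ffun 'I_m -> 'I_n}|%:R.
have M0 : 0 < M by rewrite ltr0n card_ffun card_ord expn_gt0 n0.
have Vdef : Var X = SumO (fun u => (X u - SumO X / M) ^+ 2) / M by [].
have V0 : 0 <= Var X.
  rewrite Vdef; apply: divr_ge0; last exact: ltW.
  by apply: sumr_ge0 => u _; exact: sqr_ge0.
rewrite ger0_norm //.
pose c (j : nat) (u : {ffun 'I_m -> 'I_n}) := X (updn u j t0).
have ci : forall j, (j < m)%N -> indep j (c j).
  by move=> j _ u t; rewrite /c updnK.
have ES := @efron_stein R 'I_n m X c T0 ci.
rewrite Vdef.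
have Mi : 0 <= M^-1 by rewrite invr_ge0 ltW.
apply: le_trans (ler_wpM2r Mi ES) _.
rewrite mulr_suml.
set B := m%:R * S1 R n m + m%:R ^+ 2 * S2 R n m ^+ 2.
apply: (@le_trans _ _ (\sum_(j < m) B)).
  apply: ler_sum => j _.
  have := @EAk2 R n m j n0; rewrite /EE -/M; apply: le_trans; rewrite le_eqVlt; apply/orP; left; apply/eqP.
  congr (_ / _); apply: SumO_ext => u.
  by rewrite /c /X Xdiff.
rewrite sumr_const card_ord -[B *+ m]mulr_natl.
have m2 : (2 <= m)%N by lia.
set L := ln (m%:R : R).
have L3 : ln 3 <= L by rewrite /L ler_ln ?posrE ?ltr0n ?ler_nat //; lia.
have L0 : 0 < L by exact: (lt_le_trans l3 L3).
have M1 : (0 : R) < m%:R by rewrite ltr0n; lia.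
set s1 := S1 R n m; set s2 := S2 R n m.
have h1 : s1 <= C1 * L / m%:R by exact: S1bound.
have h2 : s2 <= s1 / L by exact: S2_le.
have s20 : 0 <= s2.
  apply: sumr_ge0 => p /andP [pp _]; rewrite divr_ge0 ?exprn_ge0 ?ler0n //.
  by apply: ln_ge0; rewrite ler1n prime_gt0.
have C10 : 0 <= C1 by rewrite /C1 mulr_ge0 // ln_ge0 //; lra.
have h1' : m%:R * s1 <= C1 * L.
  by move: h1; rewrite ler_pdivlMr // mulrC.
have a : s2 * L <= s1 by move: h2; rewrite ler_pdivlMr.
have b : (m%:R * s2) * L <= C1 * L.
  apply: le_trans h1'; rewrite -mulrA; apply: ler_wpM2l => //; exact: ltW.
have h2' : m%:R * s2 <= C1 by move: b; rewrite ler_pM2r.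
have y0 : 0 <= m%:R * s2 by rewrite mulr_ge0 // ltW.
have h3 : (m%:R * s2) ^+ 2 <= C1 ^+ 2.
  by rewrite !expr2; apply: ler_pM.
have h4 : C1 ^+ 2 <= C1 ^+ 2 / ln 3 * L.
  have : 1 <= L / ln 3 by rewrite ler_pdivlMr // mul1r.
  move=> h; have -> : C1 ^+ 2 / ln 3 * L = C1 ^+ 2 * (L / ln 3) by ring.
  rewrite -[X in X <= _]mulr1; apply: ler_wpM2l => //; exact: exprn_ge0.
have eB : B = m%:R * s1 + (m%:R * s2) ^+ 2 by rewrite /B exprMn.
rewrite eB.
have : m%:R * (m%:R * s1 + (m%:R * s2) ^+ 2) <= m%:R * (C1 * L + C1 ^+ 2 / ln 3 * L).
  apply: ler_wpM2l; first exact: ltW.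
  by apply: lerD => //; exact: (le_trans h3 h4).
move=> H; apply: le_trans H _; rewrite le_eqVlt; apply/orP; left; apply/eqP; ring.
Qed.
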